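(* Assume (FWW) for a flow $\Phi_t$ on $\mathbb{R}^n$ and a $k$-cone $C$. Let $K\subset\mathbb{R}^n$ be a compact invariant set and let $\mathbb{R}^n=E_y\oplus F_y$, $y\in K$, be a $k$-exponential separation of $(\Phi_t,D\Phi_t)$ along $K$ associated with $C$. Then there exists a constant $\delta'>0$ such that $$\{v\in\mathbb{R}^n:\ d(v,E_y\cap S)\le\delta'\}\subset \operatorname{Int}C\quad\text{for every }y\in K,$$ where $S=\{v\in\mathbb{R}^n:\|v\|=1\}$ and $d(v,B)=\inf_{w\in B}\|v-w\|$.
   Context: A closed set $C\subset\mathbb{R}^n$ is a $k$-cone if $lv\in C$ for all $v\in C$, $l\in\mathbb{R}$, and the maximal dimension of a linear subspace contained in $C$ is $k$. $C$ is $k$-solid if there is a $k$-dimensional subspace $W$ with $W\setminus\{0\}\subset\operatorname{Int}C$. Write $x\sim y$ if $x-y\in C$ and $x\approx y$ if $x-y\in\operatorname{Int}C$. A flow $\Phi_t$ is strongly monotone with respect to a $k$-solid cone $C$ if $x\sim y$ implies $\Phi_t(x)\sim\Phi_t(y)$ for $t\ge0$, and $x\ne y$, $x\sim y$ imply $\Phi_t(x)\approx\Phi_t(y)$ for $t>0$. Assumption (FWW): the flow $\Phi_t$ on $\mathbb{R}^n$ is $C^{1,\alpha}$-smooth (the map $(t,x)\mapsto\Phi_t(x)$ is $C^1$ with locally $\alpha$-Hölder derivative, $\alpha\in(0,1]$), strongly monotone with respect to the $k$-cone $C$, and $D_x\Phi_t(C\setminus\{0\})\subset\operatorname{Int}C$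 for all $t>0$ and $x$. A $k$-exponential separation along a compact invariant set $K$ associated with $C$ consists of a continuous (in the Grassmannian gap metric) family of $k$-dimensional subspaces $E_x$ and a continuous family of $(n-k)$-dimensional subspaces $F_x$, $x\in K$, such that: $\mathbb{R}^n=E_x\oplus F_x$; $D_x\Phi_tE_x=E_{\Phi_t(x)}$ and $D_x\Phi_tF_x\subset F_{\Phi_t(x)}$ for $t>0$; there are $M>0$, $0<\gamma<1$ with $\|D_x\Phi_tw\|\le M\gamma^t\|D_x\Phi_tv\|$ for all $x\in K$, unit $w\in F_x$, unit $v\in E_x$, $t\ge0$; and $E_x\subset\operatorname{Int}C\cup\{0\}$, $F_x\cap C=\{0\}$ for all $x\in K$. *)

(* Defs.v *)
From HB Require Import structures.
From mathcomp Require Import all_boot all_order all_algebra.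
From mathcomp Require Import all_classical all_reals all_analysis.
Set Implicit Arguments. Unset Strict Implicit. Unset Printing Implicit Defensive.
Import Order.TTheory GRing.Theory Num.Theory.
Import numFieldNormedType.Exports.
Local Open Scope classical_set_scope.
Local Open Scope ring_scope.

Section Defs.
Variables (R : realType) (n : nat).
Notation V := 'rV[R]_n.

Definition enorm (v : V) : R := Num.sqrt (\sum_(i < n) v ord0 i ^+ 2).

Definition usphere : set V := [set v | enorm v = 1].

(* d(v,B) = inf_{w in B} ||v - w|| (extended-real valued; = +oo if B empty) *)
Definition dist_set (v : V) (B : set V) : \bar R :=
  ereal_inf [set (enorm (v - w))%:E | w in B].

Definition vsset (W : {vspace V}) : set V := [set v | v \in W].

Definition k_cone (k : nat) (C : set V) : Prop :=
  [/\ closed C,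
      (forall v l, C v -> C (l *: v)),
      (exists W : {vspace V}, \dim W = k /\ vsset W `<=` C) &
      (forall W : {vspace V}, vsset W `<=` C -> (\dim W <= k)%N)].

Definition cone_rel (C : set V) (x y : V) : Prop := C (x - y).
Definition cone_rel_int (C : set V) (x y : V) : Prop := interior C (x - y).

Definition is_flow (Phi : R -> V -> V) : Prop :=
  (forall x, Phi 0 x = x) /\ (forall s t x, Phi (s + t) x = Phi s (Phi t x)).

Definition strongly_monotone (Phi : R -> V -> V) (C : set V) : Prop :=
  (forall x y t, 0 <= t -> cone_rel C x y -> cone_rel C (Phi t x) (Phi t y)) /\
  (forall x y t, 0 < t -> x != y -> cone_rel C x y ->
                  cone_rel_int C (Phi t x) (Phi t y)).

Definition joint (Phi : R -> V -> V) : R * V -> V := fun p => Phi p.1 p.2.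

(* C^{1,alpha}: (t,x) |-> Phi_t(x) is C^1 and its derivative is locally
   alpha-Hoelder (in operator norm, Euclidean norm on R^n, max norm on R x R^n). *)
Definition C1alpha (Phi : R -> V -> V) (alpha : R) : Prop :=
  let G := joint Phi in
  [/\ (forall p, differentiable G p),
      (forall p (e : R), 0 < e -> exists2 d : R, 0 < d & forall q, `|q - p| < d ->
          forall h, enorm ('d G q h - 'd G p h) <= e * `|h|) &
      (forall p, exists r : R, exists L : R, 0 < r /\
          forall q1 q2, `|q1 - p| < r -> `|q2 - p| < r ->
          forall h, enorm ('d G q1 h - 'd G q2 h) <= L * (`|q1 - q2| `^ alpha) * `|h|)].

Definition DPhi (Phi : R -> V -> V) (t : R) (x v : V) : V := 'd (Phi t) x v.

Definition FWW (Phi : R -> V -> V) (alpha : R) (k : nat) (C : set V) : Prop :=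
  (0 < alpha <= 1) /\ [/\ is_flow Phi, C1alpha Phi alpha, k_cone k C,
      strongly_monotone Phi C &
      (forall t x v, 0 < t -> C v -> v != 0 -> interior C (DPhi Phi t x v))].

Definition flow_invariant (Phi : R -> V -> V) (K : set V) : Prop :=
  forall t, Phi t @` K = K.

Definition gap (A B : {vspace V}) : \bar R :=
  maxe (ereal_sup [set dist_set u (vsset B) | u in vsset A `&` usphere])
       (ereal_sup [set dist_set u (vsset A) | u in vsset B `&` usphere]).

Definition gap_continuous_on (K : set V) (E : V -> {vspace V}) : Prop :=
  forall x, K x -> forall e : R, 0 < e -> exists2 d : R, 0 < d &
    forall y, K y -> enorm (y - x) < d -> (gap (E x) (E y) < e%:E)%E.

Definition exp_separation (Phi : R -> V -> V) (K : set V) (k : nat) (C : set V)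
    (E F : V -> {vspace V}) : Prop :=
  (forall x, K x -> \dim (E x) = k /\ \dim (F x) = (n - k)%N) /\
  [/\ gap_continuous_on K E /\ gap_continuous_on K F,
      (forall x, K x -> (E x + F x = fullv)%VS /\ (E x :&: F x = 0)%VS),
      (forall x t, K x -> 0 < t ->
         (forall w, w \in E (Phi t x) <-> exists2 v, v \in E x & DPhi Phi t x v = w) /\
         (forall v, v \in F x -> DPhi Phi t x v \in F (Phi t x))),
      (exists M gamma : R, [/\ 0 < M, 0 < gamma < 1 &
         forall x t w v, K x -> 0 <= t -> w \in F x -> enorm w = 1 ->
           v \in E x -> enorm v = 1 ->
           enorm (DPhi Phi t x w) <= M * (gamma `^ t) * enorm (DPhi Phi t x v)]) &
      (forall x, K x -> (forall v, v \in E x -> v != 0 -> interior C v) /\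
                        (forall v, v \in F x -> C v -> v = 0))].

End Defs.
Arguments usphere {R n}.

(* Main.v *)
Require Import Defs.
From HB Require Import structures.
From mathcomp Require Import all_boot all_order all_algebra.
From mathcomp Require Import all_classical all_reals all_analysis.
From mathcomp Require Import ring lra.

Import Order.TTheory GRing.Theory Num.Theory.
Import numFieldNormedType.Exports.
Local Open Scope classical_set_scope.
Local Open Scope ring_scope.

Section Norms.
Context {R : realType} {n : nat}.
Notation V := 'rV[R]_n.
Local Notation N := (@enorm R n).
Definition ss (v : V) : R := \sum_(i < n) v ord0 i ^+ 2.

Lemma ss_ge0 (v : V) : 0 <= ss v.
Proof. by apply: sumr_ge0 => i _; exact: sqr_ge0. Qed.

Lemma enorm_ge0 (v : V) : 0 <= N v.
Proof. exact: sqrtr_ge0. Qed.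

Lemma enorm_sq (v : V) : N v ^+ 2 = ss v.
Proof. by rewrite /enorm sqr_sqrtr // ss_ge0. Qed.

Lemma enorm_le (v : V) (c : R) : 0 <= c -> (N v <= c) = (ss v <= c ^+ 2).
Proof.
move=> c0; rewrite -enorm_sq; rewrite ler_pXn2r // nnegrE //; exact: enorm_ge0.
Qed.

Lemma ss_eq0 (v : V) : ss v = 0 -> forall i, v ord0 i = 0.
Proof.
move=> h i; apply/eqP; rewrite -sqrf_eq0; apply/eqP.
by apply: (psumr_eq0P (P := predT) (F := fun i => v ord0 i ^+ 2)) => // j _; exact: sqr_ge0.
Qed.

Lemma enorm_eq0 (v : V) : N v = 0 -> forall i, v ord0 i = 0.
Proof. by move=> h; apply: ss_eq0; rewrite -enorm_sq h expr0n. Qed.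

Lemma cauchy_schwarz (a b : V) : \sum_(i < n) a ord0 i * b ord0 i <= N a * N b.
Proof.
have [A0|A0] := eqVneq (N a) 0.
  rewrite A0 mul0r big1 // => i _; by rewrite (@enorm_eq0 a A0) mul0r.
have [B0|B0] := eqVneq (N b) 0.
  rewrite B0 mulr0 big1 // => i _; by rewrite (@enorm_eq0 b B0) mulr0.
have Ap : 0 < N a by rewrite lt_def A0 enorm_ge0.
have Bp : 0 < N b by rewrite lt_def B0 enorm_ge0.
set A := N a in A0 Ap *; set B := N b in B0 Bp *.
have H : \sum_(i < n) (2 * A * B) * (a ord0 i * b ord0 i) <=
         \sum_(i < n) (B ^+ 2 * a ord0 i ^+ 2 + A ^+ 2 * b ord0 i ^+ 2).
  apply: ler_sum => i _.
  have := sqr_ge0 (B * a ord0 i - A * b ord0 i); lra.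
move: H; rewrite -mulr_sumr big_split /= -!mulr_sumr -/(ss a) -/(ss b).
rewrite -!enorm_sq -/A -/B => H.
have ABp : 0 < A * B by rewrite mulr_gt0.
rewrite -(ler_pM2l (mulr_gt0 (ltr0n _ 2) ABp)).
apply: (le_trans _ (le_trans H _)); first by rewrite mulrA.
rewrite le_eqVlt; apply/orP; left; apply/eqP; ring.
Qed.

Lemma enorm_triangle (a b : V) : N (a + b) <= N a + N b.
Proof.
rewrite enorm_le; last by rewrite addr_ge0 // enorm_ge0.
have -> : ss (a + b) = ss a + 2 * \sum_(i < n) a ord0 i * b ord0 i + ss b.
  rewrite /ss mulr_sumr -!big_split /=; apply: eq_bigr => i _; rewrite mxE; ring.
rewrite -!enorm_sq; have := cauchy_schwarz a b; lra.
Qed.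

Lemma enormZ (c : R) (v : V) : N (c *: v) = `|c| * N v.
Proof.
rewrite /enorm -sqrtr_sqr -sqrtrM ?sqr_ge0 //; congr Num.sqrt.
rewrite mulr_sumr; apply: eq_bigr => i _; rewrite mxE; ring.
Qed.

Lemma enormN (v : V) : N (- v) = N v.
Proof. by rewrite -scaleN1r enormZ normrN normr1 mul1r. Qed.

Lemma enorm0 : N 0 = 0.
Proof. by rewrite -(scale0r (0 : V)) enormZ normr0 mul0r. Qed.

Lemma enormB (a b : V) : N (a - b) = N (b - a).
Proof. by rewrite -enormN opprB. Qed.

Lemma enorm_lip (a b : V) : `|N a - N b| <= N (a - b).
Proof.
rewrite ler_norml; apply/andP; split.
  have := enorm_triangle (b - a) a; rewrite subrK enormB; lra.
have := enorm_triangle (a - b) b; rewrite subrK; lra.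
Qed.

Lemma coord_le_mx (v : V) i : `|v ord0 i| <= `|v|.
Proof.
rewrite [X in _ <= X]/Num.Def.normr /= mx_normrE.
exact: (le_bigmax _ (fun ij : 'I_1 * 'I_n => `|v ij.1 ij.2|) (ord0, i)).
Qed.

Lemma coord_le_enorm (v : V) i : `|v ord0 i| <= N v.
Proof.
rewrite /enorm -sqrtr_sqr ler_sqrt ?ss_ge0 //.
rewrite (bigD1 i) //= ler_wpDr //; apply: sumr_ge0 => j _; exact: sqr_ge0.
Qed.

Lemma mx_le_enorm (v : V) : `|v| <= N v.
Proof.
rewrite [X in X <= _]/Num.Def.normr /= mx_normrE; apply: bigmax_le; first exact: enorm_ge0.
by move=> [i j] _ /=; rewrite (ord1 i); exact: coord_le_enorm.
Qed.

Lemma enorm_le_mx (v : V) : N v <= n%:R * `|v|.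
Proof.
rewrite enorm_le ?mulr_ge0 //.
apply: (@le_trans _ _ (\sum_(i < n) `|v| ^+ 2)).
  apply: ler_sum => i _; rewrite -real_normK ?num_real //.
  by rewrite ler_pXn2r // ?nnegrE // coord_le_mx.
rewrite sumr_const card_ord exprMn -(mulr_natl (`|v| ^+ 2)); apply: ler_wpM2r; first exact: sqr_ge0.
rewrite -natrX ler_nat; have [->|n0] := posnP n; first by [].
by rewrite expnS expn1 leq_pmulr.
Qed.
End Norms.
Section Topo.
Context {R : realType} {n : nat}.
Notation V := 'rV[R]_n.
Local Notation N := (@enorm R n).

Lemma lin_bound (f : {linear V -> V}) (x : V) :
  `|f x| <= `|x| * \sum_(i < n) `|f 'e_i|.
Proof.
rewrite {1}(row_sum_delta x) linear_sum; apply: (le_trans (ler_norm_sum _ _ _)).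
rewrite mulr_sumr; apply: ler_sum => i _; rewrite linearZ normrZ.
by apply: ler_wpM2r; [exact: normr_ge0 | exact: coord_le_mx].
Qed.

Lemma lip_cont (f : V -> R) (c : R) :
  (forall a b, `|f a - f b| <= c * `|a - b|) -> continuous f.
Proof.
move=> h x; apply/(@cvgrPdist_lt _ _ _ (nbhs x)) => e e0.
have c1 : 0 < `|c| + 1 by rewrite ltr_wpDl.
apply/nbhs_ballP; exists (e / (`|c| + 1)); first by rewrite /= divr_gt0.
move=> y; rewrite -ball_normE /= => hy.
apply: (le_lt_trans (h x y)); apply: (le_lt_trans (y := (`|c| + 1) * `|x - y|)).
  by apply: ler_wpM2r; [exact: normr_ge0 | rewrite (le_trans (ler_norm c)) // lerDl].
by rewrite mulrC -ltr_pdivlMr.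
Qed.

Lemma closed_lip (f : V -> R) (c y : R) :
  (forall a b, `|f a - f b| <= c * `|a - b|) -> closed [set v | f v = y].
Proof.
move=> h; have := (continuous_closedP f).1 (@lip_cont f c h) _ (@closed_eq R y).
by [].
Qed.

Lemma usphere_closed : closed (@usphere R n).
Proof.
apply: (@closed_lip N n%:R 1) => a b.
exact: (le_trans (enorm_lip a b) (enorm_le_mx _)).
Qed.

Lemma vsset_closed (W : {vspace V}) : closed (vsset W).
Proof.
pose c := \sum_(i < n) `|projv W 'e_i|.
have -> : vsset W = [set v | N (v - projv W v) = 0].
  rewrite /vsset; apply/seteqP; split => v /=.
    by move=> vW; rewrite projv_id // subrr enorm0.
  move=> /enorm_eq0 h; have -> : v = projv W v.
    by apply/rowP => i; move: (h i); rewrite !mxE => /eqP; rewrite subr_eq0 => /eqP.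
  exact: memv_proj.
apply: (@closed_lip _ (n%:R * (1 + c))) => a b.
apply: (le_trans (enorm_lip _ _)).
have -> : a - projv W a - (b - projv W b) = (a - b) - projv W (a - b).
  rewrite [projv W (a - b)]linearB /= !opprB addrACA [RHS]addrACA (addrC (- b)) //.
apply: (le_trans (enorm_le_mx _)); rewrite -mulrA ler_wpM2l //.
apply: (le_trans (ler_normB _ _)); rewrite mulrDl mul1r lerD2l mulrC.
exact: lin_bound.
Qed.

Lemma sphere_compact (W : {vspace V}) : compact (vsset W `&` usphere).
Proof.
apply: bounded_closed_compact; last exact: closedI (vsset_closed W) usphere_closed.
rewrite /= /bounded_near; near=> M => x [_ hx] /=; apply: (le_trans (mx_le_enorm x)).
rewrite /usphere /= in hx; rewrite hx; near: M.
by apply: nbhs_pinfty_ge; rewrite num_real.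
Unshelve. all: by end_near.
Qed.

Lemma uniform_from_compact (X : topologicalType) (A : set X) (P : R -> X -> Prop) :
  compact A -> (forall e e' x, e' <= e -> P e x -> P e' x) ->
  (forall x, A x -> exists2 e, 0 < e & \forall x' \near x, P e x') ->
  exists2 e, 0 < e & forall x, A x -> P e x.
Proof.
move=> /compact_near_coveringP cov mono loc.
have H : \forall i \near (0 : R)^'+, A `<=` P i.
  apply: (cov R _ P).
  move=> x Ax; have [e e0 hx] := loc x Ax.
  exists ([set x' | P e x'], [set i | i < e]); first by split => //; exact: nbhs_right_lt.
  by move=> [x' i] [/= h1 h2]; apply: mono h1; exact: ltW.
have [e [e0 he]] := filter_ex (filterI (nbhs_right_gt (0 : R)) H).
by exists e.
Qed.
End Topo.
Lemma norm_aux (R : realType) (a : R) : 0 < a -> `|1 - a^-1| * a = `|a - 1|.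
Proof.
move=> Ha; rewrite -{2}(gtr0_norm Ha) -normrM mulrBl mul1r mulVf //.
by rewrite gt_eqF.
Qed.

Theorem lemma3p3 (R : realType) (n k : nat) (Phi : R -> 'rV[R]_n -> 'rV[R]_n)
    (alpha : R) (C K : set 'rV[R]_n) (E F : 'rV[R]_n -> {vspace 'rV[R]_n}) :
  FWW Phi alpha k C ->
  compact K -> flow_invariant Phi K ->
  exp_separation Phi K k C E F ->
  exists2 delta' : R, 0 < delta' &
    forall y, K y -> forall v : 'rV[R]_n,
      (dist_set v (vsset (E y) `&` usphere) <= delta'%:E)%E -> interior C v.
Proof.
move=> _ cptK _ [_ [[gapE _] _ _ _ hEF]].
pose B y := vsset (E y) `&` (@usphere R n).
have step1a : forall y, K y -> exists2 e : R, 0 < e &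
    forall u, B y u -> forall v, `|v - u| < e -> interior C v.
  move=> y Ky.
  apply: (@uniform_from_compact R _ (B y)
     (fun e u => forall v, `|v - u| < e -> interior C v)).
  - exact: sphere_compact.
  - by move=> e e' u le h v hv; apply: h; exact: lt_le_trans hv le.
  move=> u [uE uS].
  have u0 : u != 0.
    apply/eqP => u0; move: uS; rewrite /usphere /= u0 enorm0 => /eqP.
    by rewrite eq_sym oner_eq0.
  have iu : interior C u := (hEF y Ky).1 u uE u0.
  have /nbhs_ballP [r /= r0 hr] := nbhs_interior iu.
  exists (r / 2); first by rewrite divr_gt0.
  apply/nbhs_ballP; exists (r / 2); first by rewrite /= divr_gt0.
  move=> u'; rewrite -ball_normE /= => hu' v hv; apply: hr.
  rewrite -ball_normE /=; apply: (le_lt_trans (ler_distD u' _ _)).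
  rewrite (distrC u' v); lra.
have step1b : forall y, K y -> exists2 e : R, 0 < e &
    \forall y' \near y, (K y' -> forall u, B y' u -> forall v,
       enorm (v - u) < e -> interior C v).
  move=> y Ky; have [e0 e0p h0] := step1a y Ky.
  pose e1 := Num.min e0 1.
  have e1p : 0 < e1 by rewrite lt_min e0p ltr01.
  have e1le0 : e1 <= e0 by rewrite ge_min lexx.
  have e1le1 : e1 <= 1 by rewrite ge_min lexx orbT.
  have [d d0 hd] := gapE y Ky (e1 / 4) (divr_gt0 e1p (ltr0n _ 4)).
  exists (e1 / 2); first by rewrite divr_gt0.
  have n1 : 0 < n%:R + 1 :> R by rewrite ltr_wpDl ?ler0n ?ltr01.
  apply/nbhs_ballP; exists (d / (n%:R + 1)); first by rewrite /= divr_gt0.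
  move=> y' hy' Ky' u [uE uS] v hv.
  rewrite -ball_normE /= in hy'.
  have Nyy : enorm (y' - y) < d.
    apply: (le_lt_trans (enorm_le_mx (y' - y))).
    have h1 : (n%:R + 1) * `|y' - y| < d by rewrite mulrC -ltr_pdivlMr // distrC.
    have := normr_ge0 (y' - y); nra.
  have hg := hd y' Ky' Nyy.
  have hdist : (dist_set u (vsset (E y)) < (e1 / 4)%:E)%E.
    apply: le_lt_trans hg; rewrite /gap le_max; apply/orP; right.
    by apply: ereal_sup_ubound; exists u.
  have [z [w wE <-] hz] := ereal_inf_lt hdist.
  rewrite lte_fin in hz.
  have Nu : enorm u = 1 := uS.
  have Nw := enorm_lip u w; rewrite Nu in Nw.
  move: (Nw); rewrite ler_norml => /andP [h1 h2].
  have Nwp : 0 < enorm w by lra.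
  pose w' := (enorm w)^-1 *: w.
  have w'B : B y w'.
    split; first by rewrite /vsset /=; exact: memvZ.
    rewrite /usphere /= enormZ ger0_norm ?invr_ge0 ?(ltW Nwp) // mulVf //.
    by rewrite gt_eqF.
  have Nww' : enorm (w - w') = `|enorm w - 1|.
    by rewrite /w' -{1}(scale1r w) -scalerBl enormZ norm_aux.
  have t1 := enorm_triangle (v - u) (u - w').
  rewrite addrA subrK in t1.
  have t2 := enorm_triangle (u - w) (w - w').
  rewrite addrA subrK Nww' in t2.
  rewrite distrC in Nw.
  apply: (h0 w' w'B v); apply: (le_lt_trans (mx_le_enorm _)); lra.
have [δ δp hδ] := @uniform_from_compact R _ K
  (fun δ y' => K y' -> forall u, B y' u -> forall v,
       enorm (v - u) < δ -> interior C v) cptK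
  (fun e e' x le h Kx u Bu v hv => h Kx u Bu v (lt_le_trans hv le)) step1b.
exists (δ / 2); first by rewrite divr_gt0.
move=> y Ky v hv.
have : (dist_set v (B y) < δ%:E)%E.
  by apply: (le_lt_trans hv); rewrite lte_fin; lra.
move=> /ereal_inf_lt [z [u uB <-] hz].
by apply: (hδ y Ky Ky u uB v); rewrite -lte_fin.
Qed.
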